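(* Let $\|\cdot\|$ be a norm on $\mathbb{R}^d$ with dual norm $\|z\|_*=\max_{\|u\|\le1}\langle u,z\rangle$, let $\Phi$ be a mirror map whose Bregman divergence satisfies $\frac{m}{2}\|x-y\|^2\le D_\Phi(x,y)\le\frac{M}{2}\|x-y\|^2$ for constants $0<m\le M$, and let $f_t$ be a convex function on the convex set $\mathcal{X}$, with $\Phi$ and $f_t$ continuously differentiable on $\mathcal{X}$. Fix a point $x_{t-1}$ and, for $K_l=\{x: f_t(x)\le l\}$, let $x(l)=\Pi^\Phi_{K_l}(x_{t-1})$. Then the function $$h(l)=\frac{\|\nabla\Phi(x_{t-1})-\nabla\Phi(x(l))\|_*}{\|\nabla f_t(x(l))\|_*}$$ is continuous in $l$.
   Context: For a convex function $\Phi$, the Bregman divergence is $D_\Phi(x,y)=\Phi(x)-\Phi(y)-\nabla\Phi(y)^T(x-y)$, and the Bregman projection of $x$ onto a convex set $K$ is $\Pi^\Phi_K(x)=\arg\min_{y\in K}D_\Phi(y,x)$. *)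

(* Defs.v *)
From HB Require Import structures.
From mathcomp Require Import all_boot all_order all_algebra.
From mathcomp Require Import all_classical all_reals all_analysis.
Set Implicit Arguments. Unset Strict Implicit. Unset Printing Implicit Defensive.
Import Order.TTheory GRing.Theory Num.Theory.
Import numFieldNormedType.Exports.
Local Open Scope classical_set_scope.
Local Open Scope ring_scope.

Definition dotp (R : realType) (d : nat) (u v : 'rV[R]_d) : R :=
  \sum_(i < d) u ord0 i * v ord0 i.

Definition is_norm (R : realType) (d : nat) (N : 'rV[R]_d -> R) : Prop :=
  [/\ forall x, N x = 0 -> x = 0,
      forall (a : R) x, N (a *: x) = `|a| * N x
    & forall x y, N (x + y) <= N x + N y].

Definition dual_norm (R : realType) (d : nat) (N : 'rV[R]_d -> R) (z : 'rV[R]_d) : R :=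
  sup [set dotp u z | u in [set u : 'rV[R]_d | N u <= 1]].

Definition is_gradient (R : realType) (d : nat) (F : 'rV[R]_d -> R)
  (x g : 'rV[R]_d) : Prop :=
  differentiable F x /\ forall v, 'd F x v = dotp g v.

Definition C1_on (R : realType) (d : nat) (X : set 'rV[R]_d)
  (F : 'rV[R]_d -> R) (gF : 'rV[R]_d -> 'rV[R]_d) : Prop :=
  (forall x, X x -> is_gradient F x (gF x)) /\ {within X, continuous gF}.

Definition convex_set_of (R : realType) (d : nat) (X : set 'rV[R]_d) : Prop :=
  forall x y (t : R), X x -> X y -> 0 <= t <= 1 -> X ((1 - t) *: x + t *: y).

Definition convex_fun_on (R : realType) (d : nat) (X : set 'rV[R]_d)
  (f : 'rV[R]_d -> R) : Prop :=
  forall x y (t : R), X x -> X y -> 0 <= t <= 1 ->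
    f ((1 - t) *: x + t *: y) <= (1 - t) * f x + t * f y.

Definition bregman (R : realType) (d : nat) (Phi : 'rV[R]_d -> R)
  (gPhi : 'rV[R]_d -> 'rV[R]_d) (x y : 'rV[R]_d) : R :=
  Phi x - Phi y - dotp (gPhi y) (x - y).

Definition is_bregman_proj (R : realType) (d : nat) (Phi : 'rV[R]_d -> R)
  (gPhi : 'rV[R]_d -> 'rV[R]_d) (K : set 'rV[R]_d) (x p : 'rV[R]_d) : Prop :=
  K p /\ forall y, K y -> bregman Phi gPhi p x <= bregman Phi gPhi y x.

Definition sublevel (R : realType) (d : nat) (X : set 'rV[R]_d)
  (f : 'rV[R]_d -> R) (l : R) : set 'rV[R]_d :=
  [set x | X x /\ f x <= l].

(* Main.v *)
Require Import Defs.
From HB Require Import structures.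
From mathcomp Require Import all_boot all_order all_algebra.
From mathcomp Require Import all_classical all_reals all_analysis.
From mathcomp Require Import ring lra.
Import Order.TTheory GRing.Theory Num.Theory.
Import numFieldNormedType.Exports.
Local Open Scope classical_set_scope.
Local Open Scope ring_scope.

Section Basic.
Context {R : realType} {d : nat}.
Implicit Types (u v w : 'rV[R]_d).

Lemma coord_le u i : `|u ord0 i| <= `|u|.
Proof.
rewrite [leRHS]/Num.Def.normr/= mx_normrE.
by apply: le_trans; last exact: (le_bigmax _ _ (ord0, i)).
Qed.

Lemma dotpDr u v w : dotp u (v + w) = dotp u v + dotp u w.
Proof. by rewrite /dotp -big_split; apply: eq_bigr => i _; rewrite mxE mulrDr. Qed.

Lemma dotpZr a u v : dotp u (a *: v) = a * dotp u v.
Proof. by rewrite /dotp mulr_sumr; apply: eq_bigr => i _; rewrite mxE mulrCA. Qed.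

Lemma dotpNr u v : dotp u (- v) = - dotp u v.
Proof. by rewrite -scaleN1r dotpZr mulN1r. Qed.

Lemma dotpBr u v w : dotp u (v - w) = dotp u v - dotp u w.
Proof. by rewrite dotpDr dotpNr. Qed.

Lemma dotp0r u : dotp u 0 = 0.
Proof. by rewrite /dotp big1 // => i _; rewrite mxE mulr0. Qed.

Lemma dotpZl a u v : dotp (a *: u) v = a * dotp u v.
Proof. by rewrite /dotp mulr_sumr; apply: eq_bigr => i _; rewrite mxE mulrA. Qed.

Lemma dotp_bound u v : `|dotp u v| <= d%:R * (`|u| * `|v|).
Proof.
rewrite /dotp; apply: le_trans (ler_norm_sum _ _ _) _.
apply: le_trans (_ : \sum_(i < d) (`|u| * `|v|) <= _).
  by apply: ler_sum => i _; rewrite normrM ler_pM ?coord_le.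
by rewrite sumr_const card_ord mulr_natl.
Qed.

Lemma dotp_self_gt0 u : u != 0 -> 0 < dotp u u.
Proof.
move=> u0; have [i ui] : exists i, u ord0 i != 0.
  apply/existsP; apply: contraR u0 => /existsPn H; apply/eqP/rowP => i.
  by rewrite mxE; apply/eqP; move: (H i); rewrite negbK.
have h1 : 0 < u ord0 i * u ord0 i by rewrite -expr2 exprn_even_gt0.
rewrite /dotp (bigD1 i) //=; apply: (lt_le_trans h1); rewrite lerDl.
by apply: sumr_ge0 => j _; rewrite -expr2 sqr_ge0.
Qed.

Lemma closed_sublevel (X : set 'rV[R]_d) (g : 'rV[R]_d -> R) (c : R) :
  closed X -> (forall z, X z -> {for z, continuous g}) ->
  closed [set z | X z /\ g z <= c].
Proof.
move=> cX cg p clp.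
have Xp : X p.
  apply: cX => B nB; case: (clp B nB) => z [[Xz _] Bz]; by exists z.
split=> //; rewrite leNgt; apply/negP => gpc.
have := cg p Xp; move/cvgrPdist_lt/(_ (g p - c)); rewrite subr_gt0 => /(_ gpc) nb.
case: (clp _ nb) => z [[_ gz] /= H].
have := ler_norm (g p - g z); lra.
Qed.

Lemma lip_cont (g : 'rV[R]_d -> R) (K : R) : 0 <= K ->
  (forall a b, `|g a - g b| <= K * `|a - b|) -> continuous g.
Proof.
move=> K0 hK x; apply/(@cvgrPdist_lt _ _ _ (nbhs x)) => e e0.
apply/(@nbhs_normP R ('rV[R]_d : normedModType R) x); exists (e / (K + 1)).
  by rewrite /= divr_gt0 //; lra.
move=> y /= hy; apply: le_lt_trans (hK _ _) _.
have K1 : 0 < K + 1 by lra.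
rewrite ltr_pdivlMr // in hy.
have : K * `|x - y| <= (K + 1) * `|x - y| by rewrite ler_wpM2r //; lra.
have := normr_ge0 (x - y).
nra.
Qed.

Lemma dotp_cont (g x0 : 'rV[R]_d) : continuous (fun z : 'rV[R]_d => dotp g (z - x0)).
Proof.
apply: (@lip_cont _ (d%:R * `|g|)); first by rewrite mulr_ge0.
move=> a b; rewrite -dotpBr (_ : a - x0 - (b - x0) = a - b); last first.
  by apply/rowP => i; rewrite !mxE; ring.
rewrite -mulrA; exact: dotp_bound.
Qed.

Lemma dist_cont (x0 : 'rV[R]_d) : continuous (fun z : 'rV[R]_d => `|z - x0|).
Proof.
apply: (@lip_cont _ 1) => // a b; rewrite mul1r.
apply: le_trans (ler_dist_dist _ _) _.
by rewrite (_ : a - x0 - (b - x0) = a - b) //; apply/rowP => i; rewrite !mxE; ring.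
Qed.

Section Norm.
Context {N : 'rV[R]_d -> R}.
Hypothesis hN : is_norm N.

Lemma N0 : N 0 = 0.
Proof. by case: hN => _ hZ _; rewrite -(scale0r (0 : 'rV[R]_d)) hZ normr0 mul0r. Qed.

Lemma NN u : N (- u) = N u.
Proof. by case: hN => _ hZ _; rewrite -scaleN1r hZ normrN1 mul1r. Qed.

Lemma Nge0 u : 0 <= N u.
Proof.
case: hN => _ _ hD; have := hD u (- u); rewrite subrr N0 NN; lra.
Qed.

Lemma NB u v : N u - N v <= N (u - v).
Proof.
case: hN => _ _ hD; have := hD (u - v) v; rewrite subrK; lra.
Qed.

Lemma Ndist u v : `|N u - N v| <= N (u - v).
Proof.
rewrite ler_norml NB andbT; have := NB v u; rewrite -[v - u]opprB NN; lra.
Qed.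

Lemma Nsum (F : 'I_d -> 'rV[R]_d) : N (\sum_(i < d) F i) <= \sum_(i < d) N (F i).
Proof.
case: hN => _ _ hD.
elim/big_ind2 : _ => //; first by rewrite N0.
by move=> a b a' b' h1 h2; apply: le_trans (hD _ _) _; apply: lerD.
Qed.

Lemma N_upper : exists2 C, 0 <= C & forall u, N u <= C * `|u|.
Proof.
case: hN => _ hZ _.
exists (\sum_(j < d) N (delta_mx 0 j)); first by apply: sumr_ge0 => j _; exact: Nge0.
move=> u; rewrite {1}(row_sum_delta u).
apply: le_trans (Nsum _) _; rewrite mulr_suml; apply: ler_sum => j _.
rewrite hZ mulrC ler_wpM2l ?Nge0 //.
by have := coord_le u j.
Qed.

Lemma N_cont : continuous N.
Proof.
have [C C0 hC] := N_upper.
move=> x; apply/(@cvgrPdist_lt _ _ _ (nbhs x)) => e e0.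
apply/(@nbhs_normP R ('rV[R]_d : normedModType R) x); exists (e / (C + 1)); first by rewrite /= divr_gt0 //; lra.
move=> y /= hy; apply: le_lt_trans (Ndist _ _) _.
apply: le_lt_trans (hC _) _.
have C1 : 0 < C + 1 by lra.
rewrite ltr_pdivlMr // in hy.
have : C * `|x - y| <= (C + 1) * `|x - y| by rewrite ler_wpM2r //; lra.
have := normr_ge0 (x - y).
nra.
Qed.

Lemma N_pos u : u != 0 -> 0 < N u.
Proof.
case: hN => h0 _ _ u0; rewrite lt_neqAle Nge0 andbT eq_sym.
by apply: contra u0 => /eqP /h0 ->.
Qed.

Lemma N_lower : exists2 c, 0 < c & forall u, c * `|u| <= N u.
Proof.
have [[v v0]|nv] := pselect (exists v : 'rV[R]_d, v != 0); last first.
  exists 1 => // u; have -> : u = 0.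
    by apply/eqP; apply/negPn/negP => H; apply: nv; exists u.
  by rewrite normr0 mulr0 N0.
pose S := [set u : 'rV[R]_d | (setT u /\ `|u| <= 1) /\ - `|u| <= -1].
have cS : compact S.
  apply: bounded_closed_compact.
    rewrite /= /bounded_near; exists 1; split; first exact: num_real.
    move=> M M1 u [[_ u1] _] /=; lra.
  apply: closed_sublevel.
    apply: closed_sublevel; first exact: closedT.
    by move=> z _; apply: norm_continuous.
  by move=> z _; apply: continuousN; apply: norm_continuous.
have S0 : S !=set0.
  exists (`|v|^-1 *: v); rewrite /S /= normrZ normrV ?unitfE ?normr_eq0 //.
  rewrite normr_id mulVf ?normr_eq0 //; split => //; lra.
have cN : {within S, continuous N} by apply: continuous_subspaceT; exact: N_cont.
have [c cS' hc] := EVT_min_rV S0 cS cN.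
rewrite inE in cS'.
have c0 : c != 0.
  apply/negP => /eqP c0; move: cS'; rewrite /S /= c0 normr0 => -[_]; lra.
exists (N c); first exact: N_pos.
move=> u; have [->|u0] := eqVneq u 0; first by rewrite normr0 mulr0 Nge0.
have Su : S (`|u|^-1 *: u).
  rewrite /S /= normrZ normrV ?unitfE ?normr_eq0 //.
  rewrite normr_id mulVf ?normr_eq0 //; split => //; lra.
have := hc _ (mem_set Su); case: hN => _ hZ _; rewrite hZ.
rewrite normrV ?unitfE ?normr_eq0 // normr_id => H.
have nu : 0 < `|u| by rewrite normr_gt0.
by rewrite mulrC -ler_pdivlMl // mulrC.
Qed.


Lemma dual_set_ne z : [set dotp u z | u in [set u | N u <= 1]] !=set0.
Proof. by exists (dotp 0 z); exists 0 => //=; rewrite N0. Qed.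

Lemma dual_bound : exists2 K, 0 <= K & forall u z, N u <= 1 -> dotp u z <= K * `|z|.
Proof.
have [c c0 hc] := N_lower.
exists (d%:R / c); first by rewrite divr_ge0 // ltW.
move=> u z hu; apply: le_trans (ler_norm _) _; apply: le_trans (dotp_bound _ _) _.
have uc : `|u| <= c^-1 by rewrite -(ler_pM2l c0) mulfV ?gt_eqF //; apply: le_trans (hc u) hu.
rewrite mulrA ler_wpM2r // ler_wpM2l //.
Qed.

Lemma dual_has_sup z : has_sup [set dotp u z | u in [set u | N u <= 1]].
Proof.
split; first exact: dual_set_ne.
have [K K0 hK] := dual_bound; exists (K * `|z|) => _ [u hu <-]; exact: hK.
Qed.

Lemma dual_ub z u : N u <= 1 -> dotp u z <= dual_norm N z.
Proof.
move=> hu; apply: sup_upper_bound; first exact: dual_has_sup.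
by exists u.
Qed.

Lemma dual_lip : exists2 K, 0 <= K & forall z w, dual_norm N z <= dual_norm N w + K * `|z - w|.
Proof.
have [K K0 hK] := dual_bound; exists K => // z w.
apply: sup_le_ub; first exact: dual_set_ne.
move=> _ [u hu <-].
have -> : dotp u z = dotp u w + dotp u (z - w) by rewrite -dotpDr addrC subrK.
by apply: lerD; [exact: dual_ub | exact: hK].
Qed.

Lemma dual_pos z : z != 0 -> 0 < dual_norm N z.
Proof.
move=> z0; have Nz := @N_pos z z0.
have H : N ((N z)^-1 *: z) <= 1.
  case: hN => _ hZ _; rewrite hZ gtr0_norm ?invr_gt0 // mulVf ?gt_eqF //.
apply: (lt_le_trans _ (dual_ub z _ H)).
by rewrite dotpZl mulr_gt0 ?invr_gt0 // dotp_self_gt0.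
Qed.

End Norm.
End Basic.

Section Breg.
Context {R : realType} {d : nat} {N : 'rV[R]_d -> R}
  {X : set 'rV[R]_d} {Phi f : 'rV[R]_d -> R} {gPhi : 'rV[R]_d -> 'rV[R]_d}
  {m M : R} (x0 : 'rV[R]_d).
Hypotheses (hN : is_norm N) (cvX : convex_set_of X) (fconv : convex_fun_on X f)
  (m0 : 0 < m)
  (hB : forall x y, X x -> X y ->
     m / 2 * N (x - y) ^+ 2 <= bregman Phi gPhi x y <= M / 2 * N (x - y) ^+ 2).

Let D y := bregman Phi gPhi y x0.

Lemma strong_conv y z t : X y -> X z -> 0 <= t <= 1 ->
  m / 2 * (t * (1 - t)) * N (y - z) ^+ 2 <=
    (1 - t) * D y + t * D z - D ((1 - t) *: y + t *: z).
Proof.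
move=> Xy Xz /andP[t0 t1].
set w := (1 - t) *: y + t *: z.
have Xw : X w by apply: cvX => //; rewrite t0 t1.
have /andP[h1 _] := hB _ _ Xy Xw; have /andP[h2 _] := hB _ _ Xz Xw.
have e1 : y - w = t *: (y - z) by apply/rowP => i; rewrite !mxE; ring.
have e2 : z - w = - ((1 - t) *: (y - z)) by apply/rowP => i; rewrite !mxE; ring.
rewrite /bregman in h1 h2.
rewrite e1 in h1; rewrite e2 NN // in h2.
case: hN => _ hZ _; rewrite !hZ (ger0_norm t0) ger0_norm ?subr_ge0 // in h1 h2.
rewrite dotpZr in h1; rewrite dotpNr dotpZr in h2.
rewrite /D /bregman !dotpBr /w dotpDr !dotpZr.
have n0 := @Nge0 _ _ N hN (y - z).
have h1' := ler_wpM2l (_ : 0 <= 1 - t) h1.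
have h2' := ler_wpM2l t0 h2.
have : 0 <= 1 - t by lra.
move=> /h1' {}h1'.
lra.
Qed.

Lemma D_conv y z t : X y -> X z -> 0 <= t <= 1 ->
  D ((1 - t) *: y + t *: z) <= (1 - t) * D y + t * D z.
Proof.
move=> Xy Xz ht; have := strong_conv _ _ _ Xy Xz ht.
have n0 := @Nge0 _ _ N hN (y - z).
case/andP: ht => t0 t1.
have : 0 <= m / 2 * (t * (1 - t)) * N (y - z) ^+ 2.
  apply: mulr_ge0; last exact: exprn_ge0.
  apply: mulr_ge0; [apply: divr_ge0; [exact: ltW | exact: ler0n] | apply: mulr_ge0; lra].
lra.
Qed.

Lemma sub_comb y z a b t : sublevel X f a y -> sublevel X f b z -> 0 <= t <= 1 ->
  sublevel X f ((1 - t) * a + t * b) ((1 - t) *: y + t *: z).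
Proof.
move=> [Xy fy] [Xz fz] ht; split; first exact: cvX.
apply: le_trans (fconv _ _ _ Xy Xz ht) _.
case/andP: ht => t0 t1.
apply: lerD; [apply: ler_wpM2l => //; lra | exact: ler_wpM2l].
Qed.

Lemma proj_ineq l q y : is_bregman_proj Phi gPhi (sublevel X f l) x0 q ->
  sublevel X f l y -> m / 4 * N (y - q) ^+ 2 <= D y - D q.
Proof.
move=> [Kq qmin] Ky.


have ht : 0 <= (2 : R)^-1 <= 1 by rewrite invr_ge0 ler0n invf_le1 ?ler1n.
have Kw := sub_comb _ _ _ _ _ Ky Kq ht.
rewrite (_ : (1 - 2^-1) * l + 2^-1 * l = l) in Kw; last by ring.

have h := qmin _ Kw.
have := strong_conv _ _ _ Ky.1 Kq.1 ht.
rewrite /D in h *.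
lra.
Qed.
End Breg.

Section Main.
Variables (R : realType) (d : nat) (N : 'rV[R]_d -> R)
  (X : set 'rV[R]_d) (Phi f : 'rV[R]_d -> R) (gPhi gf : 'rV[R]_d -> 'rV[R]_d)
  (m M : R) (x0 : 'rV[R]_d) (xl : R -> 'rV[R]_d) (I : set R).
Hypotheses (hN : is_norm N) (cvX : convex_set_of X) (clX : closed X)
  (hPhi : C1_on X Phi gPhi) (hf : C1_on X f gf)
  (fconv : convex_fun_on X f) (m0 : 0 < m)
  (hB : forall x y, X x -> X y ->
     m / 2 * N (x - y) ^+ 2 <= bregman Phi gPhi x y <= M / 2 * N (x - y) ^+ 2)
  (X0 : X x0)
  (hP : forall l, I l -> is_bregman_proj Phi gPhi (sublevel X f l) x0 (xl l)).

Let D y := bregman Phi gPhi y x0.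
Let V l := D (xl l).

Lemma fcont z : X z -> {for z, continuous f}.
Proof. by move=> Xz; apply: differentiable_continuous; exact: (hf.1 z Xz).1. Qed.

Lemma Dcont z : X z -> {for z, continuous D}.
Proof.
move=> Xz; rewrite /D /bregman.
have cP : {for z, continuous Phi}.
  by apply: differentiable_continuous; exact: (hPhi.1 z Xz).1.
have h := cvgB (cvgB cP (cvg_cst (Phi x0))) (dotp_cont (gPhi x0) x0 z). exact: h.
Qed.

Lemma xlK {l} : I l -> sublevel X f l (xl l).
Proof. by move=> Il; case: (hP _ Il). Qed.

Lemma V_ge0 {l} : I l -> 0 <= V l.
Proof.
move=> Il; have /andP[h _] := hB _ _ (xlK Il).1 X0.
apply: le_trans h; apply: mulr_ge0; last exact: exprn_ge0 (Nge0 hN _).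
by apply: divr_ge0; [exact: ltW | exact: ler0n].
Qed.

Lemma mono l l' : I l -> I l' -> l <= l' ->
  m / 4 * N (xl l - xl l') ^+ 2 <= V l - V l'.
Proof.
move=> Il Il' ll'; have [Xl fl] := xlK Il.
apply: (proj_ineq _ hN cvX fconv hB _ _ _ (hP _ Il')).
by split => //; apply: le_trans fl ll'.
Qed.

Lemma left_bound l1 l l' : I l1 -> I l -> I l' -> l1 < l -> l1 <= l' <= l ->
  V l' - V l <= (l - l') / (l - l1) * (V l1 - V l).
Proof.
move=> Il1 Il Il' l1l /andP[h1 h2].
have ll1 : 0 < l - l1 by lra.
set t := (l - l') / (l - l1).
have t0 : 0 <= t by rewrite /t divr_ge0 //; lra.
have t1 : t <= 1 by rewrite /t ler_pdivrMr // mul1r; lra.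
have ht : 0 <= t <= 1 by rewrite t0 t1.
have Kz := sub_comb cvX fconv _ _ _ _ _ (xlK Il) (xlK Il1) ht.
rewrite (_ : (1 - t) * l + t * l1 = l') in Kz; last first.
  by rewrite /t; field; rewrite gt_eqF.
have h3 := (hP _ Il').2 _ Kz.
have h4 := D_conv x0 hN cvX m0 hB _ _ _ (xlK Il).1 (xlK Il1).1 ht.
rewrite /V /D in h3 h4 *.
lra.
Qed.


Lemma cluster_closed (F : set_system 'rV[R]_d) (A : set 'rV[R]_d) p :
  cluster F p -> closed A -> F A -> A p.
Proof.
move=> clp cA FA; rewrite clusterE in clp.
by rewrite ((closure_id A).1 cA); apply: clp.
Qed.

Lemma right_cont l : I l -> forall eta, 0 < eta ->
  exists2 del, 0 < del & forall l', I l' -> l < l' < l + del -> V l - V l' < eta.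
Proof.
move=> Il eta eta0; apply: contrapT => nH.
have Hn : forall n : nat, exists l',
    [/\ I l', l < l', l' < l + n.+1%:R^-1 & V l' <= V l - eta].
  move=> n; apply: contrapT => Hn; apply: nH.
  exists n.+1%:R^-1 => // l' Il' /andP[h1 h2].
  rewrite ltNge; apply/negP => h3; apply: Hn; exists l'; split => //; lra.
have [ls hls] := choice Hn.
pose y n := xl (ls n).
have [c c0 hc] := N_lower hN.
have Vl0 := V_ge0 Il.
pose r := 2 * V l / (m * c ^+ 2) + 1.
have yX n : X (y n) by have [Il' _ _ _] := hls n; exact: (xlK Il').1.
have yB n : `|y n - x0| <= r.
  have [Il' _ _ hV] := hls n.
  have /andP[h _] := hB _ _ (yX n) X0.
  have h' := hc (y n - x0).
  have n0 := normr_ge0 (y n - x0).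
  set s := `|y n - x0| in h' n0 *.
  have ss : m * c ^+ 2 * s ^+ 2 <= 2 * V l.
    have : c * s <= N (y n - x0) by [].
    move=> cs; have cs2 : (c * s) ^+ 2 <= N (y n - x0) ^+ 2.
      have cs0 : 0 <= c * s by rewrite mulr_ge0 // ltW.
      by rewrite !expr2; apply: ler_pM.
    rewrite /V /D in hV; rewrite /y in h cs2 *.
    have : m / 2 * (c * s) ^+ 2 <= m / 2 * N (xl (ls n) - x0) ^+ 2.
      by rewrite ler_wpM2l // divr_ge0 ?ltW.
    rewrite exprMn /V /D; lra.
  have mc : 0 < m * c ^+ 2 by rewrite mulr_gt0 // exprn_gt0.
  have : s ^+ 2 <= 2 * V l / (m * c ^+ 2).
    by rewrite ler_pdivlMr // mulrC.
  rewrite /r; nra.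
pose B := [set z | X z /\ `|z - x0| <= r].
have clB : closed B.
  by apply: closed_sublevel => // z _; exact: dist_cont.
have bB : bounded_set B.
  rewrite /= /bounded_near; exists (`|x0| + r); split; first exact: num_real.
  move=> M' hM z [_ hz] /=; apply: ltW; apply: le_lt_trans hM.
  have -> : z = (z - x0) + x0 by rewrite subrK.
  by apply: le_trans (ler_normD _ _) _; rewrite addrC lerD2l.
have cB : compact B := bounded_closed_compact bB clB.
have FB : (y @ \oo) B.
  exists 0%N => //.
have [p [Bp clp]] := cB _ _ FB.
have Xp : X p by case: Bp.
have fp : f p <= l.
  rewrite leNgt; apply/negP => fpl.
  set e := f p - l.
  have e0 : 0 < e by rewrite subr_gt0.
  set k := Num.truncn e^-1.
  have hk : k.+1%:R^-1 < e.
    by rewrite invf_plt ?posrE // truncnS_gt.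
  have : [set z | X z /\ f z <= l + k.+1%:R^-1] p.
    apply: (@cluster_closed _ [set z | X z /\ f z <= l + k.+1%:R^-1] _ clp); first by apply: closed_sublevel => // z; exact: fcont.
    exists k => // n /= kn; split; first exact: yX.
    have [Il' _ h2 _] := hls n.
    apply: le_trans (xlK Il').2 _; apply: ltW; apply: lt_le_trans h2 _.
    by rewrite lerD2l lef_pV2 ?posrE // ler_nat.
  move=> [_] H; rewrite /e in hk; move: H hk; set u := k.+1%:R^-1; clearbody u; lra.
have Dp : D p <= V l - eta.
  have : [set z | X z /\ D z <= V l - eta] p.
    apply: (@cluster_closed _ [set z | X z /\ D z <= V l - eta] _ clp); first by apply: closed_sublevel => // z; exact: Dcont.
    exists 0%N => // n _; split; first exact: yX.
    by have [_ _ _ hV] := hls n.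
  by case.
have := (hP _ Il).2 _ (conj Xp fp).
rewrite -/(D p) -/(D (xl l)) -/(V l); lra.
Qed.


Lemma xl_cont l : I l -> forall eps, 0 < eps ->
  exists2 del, 0 < del & forall l', I l' -> `|l' - l| < del -> `|xl l' - xl l| < eps.
Proof.
move=> Il eps eps0.
have [c c0 hc] := N_lower hN.
pose eta := m * (c * eps) ^+ 2 / 4.
have eta0 : 0 < eta by rewrite /eta !mulr_gt0 // ?exprn_gt0 ?mulr_gt0 // invr_gt0.
have key : forall l', m / 4 * N (xl l' - xl l) ^+ 2 < eta -> `|xl l' - xl l| < eps.
  move=> l' h; rewrite ltNge; apply/negP => hs.
  have h1 : c * eps <= N (xl l' - xl l).
    by apply: le_trans (hc _); rewrite ler_wpM2l // ltW.
  have h2 : (c * eps) ^+ 2 <= N (xl l' - xl l) ^+ 2.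
    rewrite !expr2; apply: ler_pM => //; rewrite mulr_ge0 // ltW //.
  have h3 : m / 4 * (c * eps) ^+ 2 <= m / 4 * N (xl l' - xl l) ^+ 2.
    by rewrite ler_wpM2l // divr_ge0 // ltW.
  move: h h3; rewrite /eta; lra.
have [del2 del20 H2] := right_cont _ Il _ eta0.
have right : forall l', I l' -> l < l' -> l' < l + del2 -> `|xl l' - xl l| < eps.
  move=> l' Il' h1 h2; apply: key.
  have hh : l < l' < l + del2 by rewrite h1 h2.
  have := H2 _ Il' hh.
  have := mono _ _ Il Il' (ltW h1).
  rewrite -[xl l - xl l']opprB NN //; lra.
case: (pselect (exists2 l1, I l1 & l1 < l)) => [[l1 Il1 l1l] | nl]; last first.
  exists del2 => // l' Il'; rewrite ltr_norml => /andP[h1 h2].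
  case: (ltgtP l' l) => [l'l | ll' | ->]; last by rewrite subrr normr0.
    by exfalso; apply: nl; exists l'.
  by apply: right => //; lra.
pose K := V l1 - V l.
have K0 : 0 <= K.
  have := mono _ _ Il1 Il (ltW l1l); have := exprn_ge0 2 (Nge0 hN (xl l1 - xl l)).
  rewrite /K; move=> h h'; apply: le_trans h'; apply: mulr_ge0 => //.
  by apply: divr_ge0; [exact: ltW | exact: ler0n].
have b0 : 0 < l - l1 by lra.
have K1 : 0 < K + 1 by lra.
pose del1 := Num.min (l - l1) ((l - l1) * eta / (K + 1)).
have del10 : 0 < del1.
  by rewrite /del1 lt_min b0 /= !mulr_gt0 // invr_gt0.
exists (Num.min del1 del2); first by rewrite lt_min del10 del20.
move=> l' Il'; rewrite lt_min => /andP[]; rewrite /del1 lt_min => /andP[h1 h1'] h2.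
have h1n := h1; have h2n := h2; move: h1n h2n.
rewrite !ltr_norml => /andP[h1a _] /andP[_ h2b].
case: (ltgtP l' l) => [l'l | ll' | ->]; last by rewrite subrr normr0.
- apply: key.
  have hl1 : l1 <= l' by lra.
  have hh : l1 <= l' <= l by rewrite hl1 (ltW l'l).
  have := left_bound _ _ _ Il1 Il Il' l1l hh.
  have := mono _ _ Il' Il (ltW l'l).
  have hn : `|l' - l| = l - l' by rewrite distrC ger0_norm // subr_ge0 ltW.
  rewrite hn in h1'.
  rewrite ltr_pdivlMr // in h1'.
  set t := (l - l') / (l - l1).
  have t0 : 0 <= t by rewrite /t divr_ge0 //; lra.
  have ht : t * (K + 1) < eta.
    rewrite /t mulrAC ltr_pdivrMr //; lra.
  rewrite -/K; move=> hA hB'; nra.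
- by apply: right => //; lra.
Qed.

End Main.

Lemma within_eps (R : realType) (d : nat) (X : set 'rV[R]_d) (g : 'rV[R]_d -> 'rV[R]_d) p :
  {within X, continuous g} -> X p -> forall e, 0 < e ->
  exists2 del, 0 < del & forall y, X y -> `|p - y| < del -> `|g p - g y| < e.
Proof.
move=> cg Xp e e0.
have := (subspace_continuousP _ _).1 cg p Xp.
move/(@cvgrPdist_lt _ _ _ (within X (nbhs p))) => /(_ e e0).
rewrite /within => /(@nbhs_normP R ('rV[R]_d : normedModType R) p) [del del0 H].
by exists del => // y Xy hy; apply: (H y) => //.
Qed.

Lemma eps_within (R : realType) (I : set R) (g : R -> R) l :
  (forall e, 0 < e -> exists2 del, 0 < del &
     forall l', I l' -> `|l' - l| < del -> `|g l' - g l| < e) ->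
  g @ within I (nbhs l) --> g l.
Proof.
move=> H; apply/cvgrPdist_lt => e e0.
have [del del0 Hd] := H e e0.
rewrite /within; exists del => // l' /= hl Il'.
by rewrite distrC; apply: Hd => //; rewrite distrC.
Qed.

Theorem lemma5 (R : realType) (d : nat) (N : 'rV[R]_d -> R)
  (X : set 'rV[R]_d) (Phi f : 'rV[R]_d -> R) (gPhi gf : 'rV[R]_d -> 'rV[R]_d)
  (m M : R) (x0 : 'rV[R]_d) (xl : R -> 'rV[R]_d) (I : set R) :
  is_norm N ->
  convex_set_of X -> closed X ->
  C1_on X Phi gPhi -> C1_on X f gf ->
  convex_fun_on X f ->
  0 < m -> m <= M ->
  (forall x y, X x -> X y ->
     m / 2 * N (x - y) ^+ 2 <= bregman Phi gPhi x y <= M / 2 * N (x - y) ^+ 2) ->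
  X x0 ->
  (forall l, I l -> is_bregman_proj Phi gPhi (sublevel X f l) x0 (xl l)) ->
  (forall l, I l -> gf (xl l) != 0) ->
  {within I, continuous (fun l =>
     dual_norm N (gPhi x0 - gPhi (xl l)) / dual_norm N (gf (xl l)))}.
Proof.
move=> hN cvX clX hPhi hf fconv m0 mM hB X0 hP hgf.
apply/subspace_continuousP => l Il.
have xc := @xl_cont _ _ _ _ _ _ _ _ _ _ _ _ _ hN cvX clX hPhi hf fconv m0 hB X0 hP l Il.
have contg : forall g : 'rV[R]_d -> 'rV[R]_d, {within X, continuous g} ->
    forall e, 0 < e -> exists2 del, 0 < del &
      forall l', I l' -> `|l' - l| < del -> `|g (xl l') - g (xl l)| < e.
  move=> g cg e e0.
  have [d1 d10 H1] := @within_eps _ _ _ _ _ cg (hP l Il).1.1 _ e0.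
  have [del del0 H] := xc _ d10.
  exists del => // l' Il' hl; rewrite distrC; apply: H1; first exact: (hP l' Il').1.1.
  by rewrite distrC; exact: H.
have [K K0 hK] := dual_lip hN.
have dualc : forall z : R -> 'rV[R]_d,
    (forall e, 0 < e -> exists2 del, 0 < del &
      forall l', I l' -> `|l' - l| < del -> `|z l' - z l| < e) ->
    (fun t => dual_norm N (z t)) @ within I (nbhs l) --> dual_norm N (z l).
  move=> z hz; apply: eps_within => e e0.
  have [del del0 H] := hz (e / (K + 1)) (divr_gt0 e0 (ltr_wpDl K0 ltr01)).
  exists del => // l' Il' hl.
  have h := H _ Il' hl.
  have K1 : 0 < K + 1 by lra.
  rewrite ltr_pdivlMr // in h.
  have h1 := hK (z l') (z l); have h2 := hK (z l) (z l').
  rewrite distrC in h2.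
  have n0 := normr_ge0 (z l' - z l).
  rewrite ltr_norml; apply/andP; split; nra.
have hA := dualc (fun t => gPhi x0 - gPhi (xl t)) _.
have hB' := dualc (fun t => gf (xl t)) (contg _ hf.2).
have B0 : dual_norm N (gf (xl l)) != 0.
  by rewrite gt_eqF //; apply: dual_pos hN _ (hgf l Il).
apply: (cvgM (hA _) (cvgV B0 hB')).
move=> e e0; have [del del0 H] := contg _ hPhi.2 e e0.
exists del => // l' Il' hl.
rewrite (_ : gPhi x0 - gPhi (xl l') - (gPhi x0 - gPhi (xl l)) = - (gPhi (xl l') - gPhi (xl l))).
  by rewrite normrN; exact: H.
by apply/rowP => i; rewrite !mxE; ring.
Qed.
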